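(* For all $n,m\ge1$, $$F_n(x,y,q)F_{n+m-1}(xq,yq,q)-F_{n-1}(xq,yq,q)F_{n+m}(x,y,q)=(-y)^nq^{\binom n2}F_{m-1}(xq^{n+1},yq^{n+1},q).$$
   Context: $F_n(x,y,q)=\sum_{\pi}x^{s(\pi)}y^{d(\pi)}q^{rb(\pi)}$, where: - $\pi$ ranges over layered matchings of $[n]$, i.e. set partitions whose blocks are consecutive intervals $[1,i_1]/\dots/[i_{k-1}+1,n]$ of size $1$ or $2$; - $s(\pi)$ and $d(\pi)$ are the numbers of blocks of size $1$ and $2$; - for $\pi=B_1/\dots/B_k$ with $\min B_1<\dots<\min B_k$, $rb(\pi)$ is the number of pairs $(b,B_j)$ with $b\in B_i$, $j>i$, $\max B_j>b$. Equivalently, $F_0=1$, $F_1=x$, and $F_n=xq^{n-1}F_{n-1}+yq^{n-2}F_{n-2}$ for $n\ge2$. $F_n(xq^a,yq^a,q)$ denotes the substitution $x\mapsto xq^a$, $y\mapsto yq^a$. *)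

(* Defs.v *)
From HB Require Import structures.
From mathcomp Require Import all_boot all_order all_algebra.
Set Implicit Arguments. Unset Strict Implicit. Unset Printing Implicit Defensive.
Import GRing.Theory.
Local Open Scope ring_scope.

(* F_n(x,y,q) evaluated in an arbitrary commutative ring, via the recurrence
   F_0 = 1, F_1 = x, F_n = x q^(n-1) F_(n-1) + y q^(n-2) F_(n-2).
   Fpair n = (F_n, F_(n+1)). *)
Fixpoint Fpair (R : comRingType) (x y q : R) (n : nat) : R * R :=
  match n with
  | 0 => (1, x)
  | k.+1 => let (a, b) := Fpair x y q k in
            (b, x * q ^+ k.+1 * b + y * q ^+ k * a)
  end.

Definition F (R : comRingType) (x y q : R) (n : nat) : R := (Fpair x y q n).1.

Lemma F_rec_check (R : comRingType) (x y q : R) (n : nat) :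
  F x y q n.+2 = x * q ^+ n.+1 * F x y q n.+1 + y * q ^+ n * F x y q n.
Proof. rewrite /F /=; by case: (Fpair x y q n). Qed.

(* Main.v *)
Require Import Defs.
From HB Require Import structures.
From mathcomp Require Import all_boot all_order all_algebra.
From Stdlib Require Import Ring.
Import GRing.Theory.
Local Open Scope ring_scope.

Section S.
Variable R : comRingType.

Definition pl (a b : R) : R := a + b.
Definition mu (a b : R) : R := a * b.
Definition op (a : R) : R := - a.
Definition su (a b : R) : R := pl a (op b).
Definition z0 : R := 0.
Definition o1 : R := 1.
Lemma RT : @ring_theory R z0 o1 pl mu su op eq.
Proof.
split; rewrite /pl /mu /op /su /z0 /o1.
- exact: add0r. - exact: addrC. - exact: addrA. - exact: mul1r.
- exact: mulrC. - exact: mulrA. - exact: mulrDl. - by [].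
- exact: subrr.
Qed.
Set Warnings "-all".
Add Ring RR : RT.
Lemma plE (a b : R) : a + b = pl a b. Proof. by []. Qed.
Lemma muE (a b : R) : a * b = mu a b. Proof. by []. Qed.
Lemma opE (a : R) : - a = op a. Proof. by []. Qed.
Lemma z0E : 0 = z0 :> R. Proof. by []. Qed.
Lemma o1E : 1 = o1 :> R. Proof. by []. Qed.
Ltac myring := rewrite ?plE ?muE ?opE ?z0E ?o1E;
  match goal with |- @eq _ ?a ?b => change (@eq R a b) end; ring.
Variables x y q : R.

Lemma cassini p :
  F x y q p.+1 * F (x*q) (y*q) q p.+1 - F (x*q) (y*q) q p * F x y q p.+2
  = (-y) ^+ p.+1 * q ^+ 'C(p.+1, 2).
Proof.
elim: p => [|p IH].
  rewrite F_rec_check /F /= ?expr1 ?expr0. myring.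
rewrite [F x y q p.+3]F_rec_check [F (x*q) _ q p.+2]F_rec_check.
rewrite binS bin1 exprD [(-y) ^+ p.+2]exprS.
have -> : - y * (- y) ^+ p.+1 * (q ^+ 'C(p.+1, 2) * q ^+ p.+1)
  = (- y * q ^+ p.+1) * ((- y) ^+ p.+1 * q ^+ 'C(p.+1, 2)) by myring.
rewrite -IH !exprS. myring.
Qed.

Definition Sk p k :=
  F x y q p.+1 * F (x*q) (y*q) q (p.+1 + k) - F (x*q) (y*q) q p * F x y q (p.+2 + k)
  = (-y) ^+ p.+1 * q ^+ 'C(p.+1, 2) * F (x * q ^+ p.+2) (y * q ^+ p.+2) q k.

Lemma Sall p k : Sk p k /\ Sk p k.+1.
Proof.
rewrite /Sk; elim: k => [|k [IH1 IH2]].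
  rewrite !addn0 cassini mulr1; split => //.
  rewrite !addn1 [F x y q p.+3]F_rec_check [F (x*q) _ q p.+2]F_rec_check.
  rewrite -cassini /F /= !exprS. myring.
split => //.
rewrite !addnS [F x y q (p.+2 + k).+2]F_rec_check [F (x*q) _ q (p.+1 + k).+2]F_rec_check.
rewrite F_rec_check.
move: IH1 IH2; rewrite !addnS => IH1 IH2.
move/eqP: IH1; rewrite -subr_eq0 => /eqP IH1.
move/eqP: IH2; rewrite -subr_eq0 => /eqP IH2.
apply/eqP; rewrite -subr_eq0; apply/eqP.
match goal with H1: ?a1 = 0, H2 : ?a2 = 0 |- _ = 0 =>
  transitivity (x * q^+ (p.+1+k).+2 * a2 + y * q^+(p.+1+k).+1 * a1);
  [| by rewrite H1 H2 !mulr0 addr0] end.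
rewrite ?addSn ?addnS !exprS ?exprD. myring.
Qed.
End S.

Theorem corollary5p5 (R : comRingType) (x y q : R) (n m : nat) :
  (1 <= n)%N -> (1 <= m)%N ->
  F x y q n * F (x * q) (y * q) q (n + m - 1)
  - F (x * q) (y * q) q (n - 1) * F x y q (n + m)
  = (- y) ^+ n * q ^+ 'C(n, 2) * F (x * q ^+ n.+1) (y * q ^+ n.+1) q (m - 1).
Proof.
case: n => [|p] // _; case: m => [|k] // _.
have [H _] := Sall R x y q p k.
rewrite /Sk in H.
have -> : (k.+1 - 1 = k)%N by rewrite subn1.
have -> : (p.+1 + k.+1 - 1 = p.+1 + k)%N by rewrite addnS subn1.
have -> : (p.+1 - 1 = p)%N by rewrite subn1.
have -> : (p.+1 + k.+1 = p.+2 + k)%N by rewrite addnS.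
exact: H.
Qed.
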